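(* Let $p$ be a prime and $k>1$, $n>1$ natural numbers. Let $\mathcal{G}$ be a linear cellular automaton over $(\mathbb{Z}/p^k\mathbb{Z})^n$ with associated matrix $B\in(\mathbb{Z}/p^k\mathbb{Z}[X,X^{-1}])^{n\times n}$, and let $\mathcal{F}$ be the linear cellular automaton over $(\mathbb{Z}/p\mathbb{Z})^n$ whose associated matrix is $A=B\bmod p\in(\mathbb{Z}/p\mathbb{Z}[X,X^{-1}])^{n\times n}$ (all coefficients reduced modulo $p$). Then $\mathcal{G}$ is positively expansive if and only if $\mathcal{F}$ is positively expansive. Equivalently, $\mathcal{G}$ is positively expansive if and only if the matrix $B\bmod p$ is expansive.
   Context: For a natural $m>1$, write $\mathbb{L}_m=\mathbb{Z}/m\mathbb{Z}[X,X^{-1}]$. A linear cellular automaton (LCA) over $(\mathbb{Z}/m\mathbb{Z})^n$ is a map $\mathcal{F}$ on $((\mathbb{Z}/m\mathbb{Z})^n)^{\mathbb{Z}}$ given, for some $r\in\mathbb{N}$ and matrices $A_{-r},\dots,A_r\in(\mathbb{Z}/m\mathbb{Z})^{n\times n}$, by $\mathcal{F}(c)_i=\sum_{j=-r}^{r}A_jc_{i+j}$; its associated matrix is $\sum_{j=-r}^rA_jX^{-j}\in\mathbb{L}_m^{n\times n}$. The configuration space carries the metric $d(c,c')=2^{-\min\{|j|:c_j\neq c'_j\}}$ ($d(c,c)=0$). $\mathcal{F}$ is positively expansive if there is $\varepsilon>0$ such that for all configurations $c\neq c'$ there is $\ell\in\mathbb{N}$ with $d(\mathcal{F}^\ell(c),\mathcal{F}^\ell(c'))\geq\varepsilon$.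 For nonzero $\alpha\in\mathbb{L}_m$, $\deg^+(\alpha)$ (resp. $\deg^-(\alpha)$) is the largest (resp. smallest) exponent with nonzero coefficient; $\deg^+(0)=-\infty$, $\deg^-(0)=+\infty$. A monic polynomial $\alpha_0+\alpha_1t+\dots+\alpha_{n-1}t^{n-1}+t^n\in\mathbb{L}_m[t]$ is expansive if $\alpha_0\neq0$, $\deg^+(\alpha_0)>0$, $\deg^+(\alpha_0)>\deg^+(\alpha_i)$ for all $1\le i\le n-1$, $\deg^-(\alpha_0)<0$, and $\deg^-(\alpha_0)<\deg^-(\alpha_i)$ for all $1\le i\le n-1$. A matrix $A\in\mathbb{L}_m^{n\times n}$ is expansive if $\det(tI_n-A)$ is expansive. *)

(* Defs.v *)
From mathcomp Require Import all_boot all_order all_algebra.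
From Stdlib Require Import ClassicalEpsilon.
Set Implicit Arguments. Unset Strict Implicit. Unset Printing Implicit Defensive.
Import Order.TTheory GRing.Theory Num.Theory.
Local Open Scope ring_scope.

Definition config (m n : nat) := int -> 'cV['Z_m]_n.

(* Its associated matrix is sum_j A_j X^{-j}; values of A outside [-r,r]
   play no role. *)
Definition lca (m n r : nat) (A : int -> 'M['Z_m]_n) (c : config m n)
  : config m n :=
  fun i => \sum_(j < (2 * r).+1)
             A (j%:Z - r%:Z) *m c (i + (j%:Z - r%:Z)).

Definition redmx (p k n : nat) (A : 'M['Z_(p ^ k)]_n) : 'M['Z_p]_n :=
  map_mx (fun x : 'Z_(p ^ k) => (nat_of_ord x)%:R) A.

Definition diff_at (m n : nat) (c c' : config m n) (d : nat) : bool :=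
  (c d%:Z != c' d%:Z) || (c (- d%:Z) != c' (- d%:Z)).

Definition cdist (m n : nat) (c c' : config m n) : rat :=
  match excluded_middle_informative (exists d, diff_at c c' d) with
  | left H => (2%:R : rat) ^- (ex_minn H)
  | right _ => 0
  end.

Definition pos_expansive (m n : nat) (F : config m n -> config m n) : Prop :=
  exists eps : rat, 0 < eps /\
    forall c c' : config m n, c <> c' ->
      exists l : nat, eps <= cdist (iter l F c) (iter l F c').

(* Main.v *)
Require Import Defs.
From mathcomp Require Import all_boot all_order all_algebra.
From mathcomp Require Import zify ring.
From Stdlib Require Import FunctionalExtensionality Classical ClassicalEpsilon.
Set Implicit Arguments. Unset Strict Implicit. Unset Printing Implicit Defensive.
Import Order.TTheory GRing.Theory Num.Theory.
Local Open Scope ring_scope.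

Lemma cdist_mono (m n m' n' : nat) (x w : config m n) (y z : config m' n') :
  (forall d, diff_at y z d -> diff_at x w d) -> cdist y z <= cdist x w.
Proof.
move=> H; rewrite /cdist.
case: excluded_middle_informative => [Hyz|Nyz];
  case: excluded_middle_informative => [Hxw|Nxw].
- case: ex_minnP => a Ha Ma; case: ex_minnP => b Hb Mb.
  have ba : (b <= a)%N by apply: Mb; apply: H.
  by rewrite lef_pV2 ?posrE ?exprn_gt0 // ler_eXn2l.
- by exfalso; apply: Nxw; case: Hyz => a Ha; exists a; apply: H.
- by rewrite invr_ge0 exprn_ge0.
- by [].
Qed.

Lemma cdist_ext (m n m' n' : nat) (x w : config m n) (y z : config m' n') :
  (forall d, diff_at y z d = diff_at x w d) -> cdist y z = cdist x w.
Proof.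
move=> H; apply/le_anti; rewrite !cdist_mono // => d; by rewrite H.
Qed.

Definition zero (m n : nat) : config m n := fun _ => 0.
Definition scal (m n : nat) (a : 'Z_m) (c : config m n) : config m n :=
  fun i => a *: c i.
Definition csub (m n : nat) (c c' : config m n) : config m n :=
  fun i => c i - c' i.

Lemma lca_sub m n r A (c c' : config m n) :
  lca r A (csub c c') = csub (lca r A c) (lca r A c').
Proof.
apply: functional_extensionality => i; rewrite /lca /csub -sumrB.
by apply: eq_bigr => j _; rewrite mulmxBr.
Qed.

Lemma lca_scal m n r A a (c : config m n) :
  lca r A (scal a c) = scal a (lca r A c).
Proof.
apply: functional_extensionality => i; rewrite /lca /scal scaler_sumr.
by apply: eq_bigr => j _; rewrite scalemxAr.
Qed.

Lemma lca_zero m n r A : lca r A (zero m n) = zero m n.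
Proof.
apply: functional_extensionality => i; rewrite /lca /zero.
by apply: big1 => j _; rewrite mulmx0.
Qed.

Lemma iter_sub m n r A l (c c' : config m n) :
  iter l (lca r A) (csub c c') = csub (iter l (lca r A) c) (iter l (lca r A) c').
Proof. by elim: l => //= l ->; rewrite lca_sub. Qed.

Lemma iter_scal m n r A l a (c : config m n) :
  iter l (lca r A) (scal a c) = scal a (iter l (lca r A) c).
Proof. by elim: l => //= l ->; rewrite lca_scal. Qed.

Lemma iter_zero m n r A l : iter l (lca r A) (zero m n) = zero m n.
Proof. by elim: l => //= l ->; rewrite lca_zero. Qed.

Definition phi (p k : nat) (y : 'Z_p) : 'Z_(p ^ k) := (p ^ (k - 1) * y)%:R.
Arguments phi : clear implicits.


Lemma pk_gt1 (p k : nat) : prime p -> (0 < k)%N -> (1 < p ^ k)%N.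
Proof. by move=> hp hk; rewrite -{1}(expn0 p) ltn_exp2l // prime_gt1. Qed.

Lemma pk_split (p k : nat) : (0 < k)%N -> (p ^ k = p * p ^ (k - 1))%N.
Proof. by move=> hk; rewrite -expnS subn1 prednK. Qed.

Lemma phi_mod (p k a : nat) : prime p -> (0 < k)%N ->
  ((p ^ (k - 1) * (a %% p))%:R : 'Z_(p ^ k)) = (p ^ (k - 1) * a)%:R.
Proof.
move=> hp hk.
rewrite {2}(divn_eq a p) mulnDr natrD.
have -> : (p ^ (k - 1) * (a %/ p * p) = a %/ p * p ^ k)%N.
  by rewrite (pk_split p hk); ring.
by rewrite (natrM _ (a %/ p)) (pchar_Zp (pk_gt1 hp hk)) mulr0 ?addr0 ?add0r.
Qed.

Lemma phi_natr (p k a : nat) : prime p -> (0 < k)%N ->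
  phi p k (a%:R) = (p ^ (k - 1) * a)%:R.
Proof.
move=> hp hk; rewrite /phi val_Zp_nat ?prime_gt1 //.
exact: phi_mod.
Qed.

Lemma phi0 (p k : nat) : phi p k 0 = 0.
Proof. by rewrite /phi muln0. Qed.

Lemma phiD (p k : nat) : prime p -> (0 < k)%N -> forall a b, phi p k (a + b) = phi p k a + phi p k b.
Proof.
move=> hp hk a b.
have -> : a + b = ((a : nat) + (b : nat))%:R by rewrite natrD !natr_Zp.
by rewrite phi_natr // mulnDr natrD.
Qed.

Lemma phiM (p k : nat) : prime p -> (0 < k)%N -> forall (x : 'Z_(p ^ k)) (y : 'Z_p),
  phi p k ((x : nat)%:R * y) = x * phi p k y.
Proof.
move=> hp hk x y.
have -> : (x : nat)%:R * y = ((x : nat) * (y : nat))%:R by rewrite natrM natr_Zp.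
rewrite phi_natr // /phi -{2}(natr_Zp x) -natrM; congr (_%:R); ring.
Qed.

Lemma phi_inj (p k : nat) : prime p -> (0 < k)%N -> injective (phi p k).
Proof.
move=> hp hk y z; rewrite /phi => E.
have := congr1 (@nat_of_ord _) E; rewrite !val_Zp_nat ?pk_gt1 //.
have hp1 := prime_gt1 hp.
have lt y' : (p ^ (k - 1) * (y' : 'Z_p) < p ^ k)%N.
  rewrite (pk_split p hk) [(p * _)%N]mulnC ltn_pmul2l ?expn_gt0 ?prime_gt0 //.
  by apply: leq_trans (ltn_ord y') _; rewrite Zp_cast.
rewrite !modn_small // => /eqP; rewrite eqn_pmul2l ?expn_gt0 ?prime_gt0 //.
by move/eqP/val_inj.
Qed.

Definition psi (p k : nat) (x : 'Z_(p ^ k)) : 'Z_p := ((x : nat) %/ p ^ (k - 1))%:R.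

Lemma phi_psi (p k : nat) (x : 'Z_(p ^ k)) : prime p -> (0 < k)%N ->
  p%:R * x = 0 -> phi p k (psi x) = x.
Proof.
move=> hp hk E; rewrite /psi phi_natr //.
have : (p * p ^ (k - 1) %| p * x)%N.
  rewrite -(pk_split p hk).
  have := congr1 (@nat_of_ord _) E; rewrite -{1}(natr_Zp x) -natrM val_Zp_nat ?pk_gt1 //.
  by move/eqP; rewrite -/(dvdn _ _).
rewrite dvdn_pmul2l ?prime_gt0 // => dv.
by rewrite mulnC divnK // natr_Zp.
Qed.

Definition iota (p k n : nat) (c : config p n) : config (p ^ k) n :=
  fun i => map_mx (phi p k) (c i).
Arguments iota : clear implicits.

Lemma map_mx_injf (R S : Type) (f : R -> S) m n : injective f ->
  injective (map_mx f : 'M[R]_(m, n) -> 'M[S]_(m, n)).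
Proof.
move=> fi A B E; apply/matrixP => i j; apply: fi.
by have := congr1 (fun M : 'M[S]_(m, n) => M i j) E; rewrite !mxE.
Qed.

Lemma diff_iota p k n (a b : config p n) d : prime p -> (0 < k)%N ->
  diff_at (iota p k n a) (iota p k n b) d = diff_at a b d.
Proof.
move=> hp hk; rewrite /diff_at /iota.
by rewrite !(inj_eq (map_mx_injf (phi_inj hp hk))).
Qed.

Lemma cdist_iota p k n (a b : config p n) : prime p -> (0 < k)%N ->
  cdist (iota p k n a) (iota p k n b) = cdist a b.
Proof. by move=> hp hk; apply: cdist_ext => d; rewrite diff_iota. Qed.

Lemma iota_zero p k n : iota p k n (zero p n) = zero (p ^ k) n.
Proof.
apply: functional_extensionality => i; apply/matrixP => a b.
by rewrite /iota /zero !mxE phi0.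
Qed.

Lemma phi_sum p k (I : Type) (s : seq I) (F : I -> 'Z_p) :
  prime p -> (0 < k)%N ->
  phi p k (\sum_(i <- s) F i) = \sum_(i <- s) phi p k (F i).
Proof.
move=> hp hk; elim: s => [|x s IH]; first by rewrite !big_nil phi0.
by rewrite !big_cons phiD // IH.
Qed.

Lemma phi_mulmx p k n (M : 'M['Z_(p ^ k)]_n) (v : 'cV['Z_p]_n) :
  prime p -> (0 < k)%N ->
  map_mx (phi p k) (redmx M *m v) = M *m map_mx (phi p k) v.
Proof.
move=> hp hk; apply/matrixP => a b; rewrite !mxE phi_sum //.
by apply: eq_bigr => j _; rewrite !mxE phiM.
Qed.

Lemma lca_iota p k n r (B : int -> 'M['Z_(p ^ k)]_n) (c : config p n) :
  prime p -> (0 < k)%N ->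
  lca r B (iota p k n c) = iota p k n (lca r (fun j => redmx (B j)) c).
Proof.
move=> hp hk; apply: functional_extensionality => i.
rewrite /lca /iota; apply/matrixP => a b; rewrite mxE !summxE phi_sum //.
apply: eq_bigr => j _; rewrite -phi_mulmx // mxE.
by [].
Qed.

Lemma iter_iota p k n r (B : int -> 'M['Z_(p ^ k)]_n) (c : config p n) l :
  prime p -> (0 < k)%N ->
  iter l (lca r B) (iota p k n c) =
  iota p k n (iter l (lca r (fun j => redmx (B j))) c).
Proof. by move=> hp hk; elim: l => //= l ->; rewrite lca_iota. Qed.

Lemma scal_ne0 m n (a : 'Z_m) (v : 'cV['Z_m]_n) : a *: v != 0 -> v != 0.
Proof. by apply: contraNneq => ->; rewrite scaler0. Qed.

Lemma cdist_scal m n a (x : config m n) :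
  cdist (scal a x) (zero m n) <= cdist x (zero m n).
Proof.
apply: cdist_mono => d; rewrite /diff_at /scal /zero.
by case/orP => /scal_ne0 ->; rewrite ?orbT.
Qed.

Lemma base_case p k n r (B : int -> 'M['Z_(p ^ k)]_n) eps :
  prime p -> (0 < k)%N ->
  (forall c c' : config p n, c <> c' ->
      exists l : nat, eps <= cdist (iter l (lca r (fun j => redmx (B j))) c)
                                   (iter l (lca r (fun j => redmx (B j))) c')) ->
  forall e : config (p ^ k) n, e <> zero _ _ -> scal p%:R e = zero _ _ ->
  exists l, eps <= cdist (iter l (lca r B) e) (zero _ _).
Proof.
move=> hp hk H e ne E.
pose f : config p n := fun i => map_mx (@psi p k) (e i).
have ef : iota p k n f = e.
  apply: functional_extensionality => i; apply/matrixP => a b.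
  rewrite /iota /f !mxE phi_psi //.
  have := congr1 (fun c : config (p ^ k) n => c i a b) E.
  by rewrite /scal /zero !mxE.
have fne : f <> zero p n by move=> fz; apply: ne; rewrite -ef fz iota_zero.
have [l Hl] := H f (zero p n) fne.
exists l; rewrite -ef -(iota_zero p k n) iter_iota // cdist_iota //.
by rewrite iter_zero in Hl.
Qed.

Unset Implicit Arguments.
Set Strict Implicit.

Theorem lemma4 (p k n r : nat) (hp : prime p) (hk : (1 < k)%N) (hn : (1 < n)%N)
  (B : int -> 'M['Z_(p ^ k)]_n) :
  pos_expansive (lca r B) <-> pos_expansive (lca r (fun j => redmx (B j))).
Proof.
have hk0 : (0 < k)%N by apply: ltn_trans hk.
split.
- case=> eps [eps0 H]; exists eps; split => // c c' ne.
  have ne' : iota p k n c <> iota p k n c'.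
    move=> E; apply: ne; apply: functional_extensionality => i.
    apply: (map_mx_injf (phi_inj hp hk0)).
    exact: (congr1 (fun f : config (p ^ k) n => f i) E).
  have [l Hl] := H _ _ ne'; exists l.
  by rewrite !iter_iota // cdist_iota // in Hl.
- case=> eps [eps0 H]; exists eps; split => // c c' ne.
  have key : forall t e, e <> zero (p ^ k) n -> scal (p ^ t.+1)%:R e = zero _ _ ->
      exists l, eps <= cdist (iter l (lca r B) e) (zero _ _).
    elim=> [|t IH] e en E.
      by apply: (base_case hp hk0 H) => //; rewrite -(expn1 p).
    case: (classic (scal (p ^ t.+1)%:R e = zero _ _)) => [E'|E']; first exact: IH.
    have E2 : scal p%:R (scal (p ^ t.+1)%:R e) = zero _ _.
      rewrite -E; apply: functional_extensionality => i.
      by rewrite /scal scalerA -natrM -expnS.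
    have [l Hl] := base_case hp hk0 H E' E2.
    exists l; apply: le_trans Hl _.
    by rewrite iter_scal cdist_scal.
  have en : csub c c' <> zero _ _.
    move=> E; apply: ne; apply: functional_extensionality => i.
    apply/eqP; rewrite -subr_eq0; apply/eqP.
    exact: (congr1 (fun f : config (p ^ k) n => f i) E).
  have E3 : scal (p ^ k.-1.+1)%:R (csub c c') = zero _ _.
    apply: functional_extensionality => i.
    by rewrite /scal prednK // (pchar_Zp (pk_gt1 hp hk0)) scale0r.
  have [l Hl] := key k.-1 _ en E3.
  exists l; apply: le_trans Hl _; rewrite iter_sub le_eqVlt; apply/orP; left.
    apply/eqP; apply: cdist_ext => d; rewrite /diff_at /csub /zero !subr_eq0.
    by [].
Qed.
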